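(* Consider the full binary tree network with levels $0,1,\dots,9$ (root at level $0$, $512$ leaves at level $9$, $N=2^{10}-1$ nodes), in which every node at level $s<9$ owes $\$2^{10-s}$ to each of its two children, leaves owe nothing, and $\mathbf e=\mathbf 0$. For a cash injection $\mathbf c\ge \mathbf 0$, let $N_d(\mathbf c)$ be the number of nodes $i$ with $p_i<\bar p_i$, where $\mathbf p$ is the clearing payment vector. Then: if $C\ge 2048$, the minimum of $N_d(\mathbf c)$ over $\mathbf c\ge\mathbf 0$ with $\mathbf 1^T\mathbf c=C$ is $0$; and if $C$ is an integer with $0\le C<2048$ with binary expansion $C=\sum_{u\ge 0} b(u)2^u$, $b(u)\in\{0,1\}$, this minimum equals \[ 511-\sum_{u= 3}^{10} b(u)\,(2^{u-2}-1). \]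
   Context: Financial network model: $L_{ij}\ge 0$ is the amount node $i$ owes node $j$; $\bar p_i=\sum_j L_{ij}$; $\Pi_{ij}=L_{ij}/\bar p_i$ if $\bar p_i\ne0$, else $0$. Given cash on hand $\mathbf e$ and injection $\mathbf c$, the clearing payment vector is the (here unique) $\mathbf p$ with $\mathbf p=\min(\bar{\mathbf p},\Pi^T\mathbf p+\mathbf e+\mathbf c)$ componentwise: each node pays its liabilities in full if its funds (received payments plus $e_i+c_i$) suffice, otherwise pays all its funds, split among creditors in proportion to amounts owed. A node $i$ is in default if $p_i<\bar p_i$. *)

(* Defs.v *)
From HB Require Import structures.
From mathcomp Require Import all_boot all_order all_algebra.
Set Implicit Arguments. Unset Strict Implicit. Unset Printing Implicit Defensive.
Import Order.TTheory GRing.Theory Num.Theory.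
Local Open Scope ring_scope.

Section Network.
Variables (R : realFieldType) (n : nat).
(* L i j = amount node i owes node j *)
Variable L : 'I_n -> 'I_n -> R.

Definition pbar (i : 'I_n) : R := \sum_(j < n) L i j.

Definition relLiab (i j : 'I_n) : R :=
  if pbar i != 0 then L i j / pbar i else 0.

Definition clearing (e c p : 'I_n -> R) : Prop :=
  forall i : 'I_n,
    p i = Num.min (pbar i) (\sum_(j < n) relLiab j i * p j + e i + c i).

Definition Ndef (p : 'I_n -> R) : nat := #|[set i : 'I_n | p i < pbar i]|.

Definition feasible (C : R) (c : 'I_n -> R) : Prop :=
  (forall i, 0 <= c i) /\ \sum_(i < n) c i = C.

Definition min_defaults (e : 'I_n -> R) (C : R) (m : nat) : Prop :=
  (exists c p, feasible C c /\ clearing e c p /\ Ndef p = m) /\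
  (forall c p, feasible C c -> clearing e c p -> (m <= Ndef p)%N).
End Network.

(* Nodes are 'I_1023 in heap order: node k has children 2k+1 and 2k+2;
   level of node k is floor(log2(k+1)); internal nodes (levels < 9) are k < 511. *)
Definition tlevel (k : nat) : nat := trunc_log 2 k.+1.

Definition treeL (R : realFieldType) (i j : 'I_1023) : R :=
  if ((i < 511)%N && ((j == (2 * i).+1 :> nat) || (j == (2 * i).+2 :> nat)))
  then (2 ^ (10 - tlevel i))%:R else 0.

Definition bit (C u : nat) : nat := (C %/ 2 ^ u) %% 2.

(* Main.v *)
Require Import Defs.
From HB Require Import structures.
From mathcomp Require Import all_boot all_order all_algebra.
From mathcomp Require Import zify ring lra.
Import Order.TTheory GRing.Theory Num.Theory.

Module Helpers.
Set Implicit Arguments. Unset Strict Implicit. Unset Printing Implicit Defensive.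


Section Tsum.
Variables (V : Type) (idx : V) (op : Monoid.com_law idx).
Fixpoint tsum (F : nat -> V) (k d : nat) : V :=
  if d is d'.+1 then op (op (F k) (tsum F (2*k).+1 d')) (tsum F (2*k).+2 d') else idx.

Lemma tsum_lev F d k : tsum F k d =
  \big[op/idx]_(l < d) \big[op/idx]_(j < 2^l) F (k.+1 * 2^l - 1 + j).
Proof.
elim: d k => [|d IH] k; first by rewrite big_ord0.
rewrite big_ord_recl /= big_ord1 IH IH.
have -> : (k.+1 * 1 - 1 + 0 = k)%N by lia.
rewrite -Monoid.mulmA; congr (op _ _).
have e : forall l, (2 ^ (bump 0 l) = 2^l + 2^l)%N by move=> l; rewrite /bump /= expnS; lia.
under [RHS]eq_bigr => l _ do rewrite e big_split_ord.
rewrite big_split /=; congr (op _ _); apply: eq_bigr => l _; apply: eq_bigr => j _; congr F.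
  lia.
have := expn_gt0 2 l; lia.
Qed.

Lemma lev_sum F m :
  \big[op/idx]_(l < m) \big[op/idx]_(j < 2^l) F (2^l - 1 + j) =
  \big[op/idx]_(i < 2^m - 1) F i.
Proof.
elim: m => [|m IH]; first by rewrite big_ord0 expn0 subnn big_ord0.
rewrite big_ord_recr /= IH.
have e : (2 ^ m.+1 - 1 = (2^m - 1) + 2^m)%N by have := expn_gt0 2 m; rewrite expnS; lia.
rewrite e big_split_ord; congr (op _ _); apply: eq_bigr => j _; congr F.
Qed.

Lemma tsum_root F : tsum F 0 9 = \big[op/idx]_(i < 511) F i.
Proof.
rewrite tsum_lev -(lev_sum F 9); apply: eq_bigr => l _; apply: eq_bigr => j _.
by rewrite mul1n.
Qed.
End Tsum.


Definition h (M : nat) : nat := \sum_(0 <= u < 9) bit M u * (2 ^ u.+1 - 1).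

Lemma chk_super : all (fun a => all (fun b => h a + h b <= h (a + b)) (iota 0 129)) (iota 0 129).
Proof. rewrite /h unlock; vm_compute; reflexivity. Qed.

Lemma chk_link : all (fun C => \sum_(3 <= u < 11) bit C u * (2 ^ (u - 2) - 1) == h (C %/ 8)) (iota 0 2048).
Proof. rewrite /h unlock; vm_compute; reflexivity. Qed.

Lemma chk_mono : all (fun M => h M <= h M.+1) (iota 0 256).
Proof. rewrite /h unlock; vm_compute; reflexivity. Qed.

Lemma chk_pow : all (fun d => h (2 ^ d) == 2 ^ d.+1 - 1) (iota 0 9).
Proof. rewrite /h unlock; vm_compute; reflexivity. Qed.

Lemma chk_bits : all (fun M => \sum_(0 <= s < 8) bit M (7 - s) * 2 ^ (10 - s) == 8 * M) (iota 0 256).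
Proof. rewrite unlock; vm_compute; reflexivity. Qed.

Lemma chk_spine : all (fun M => \sum_(0 <= t < 8) bit M (7 - t) * (2 ^ (8 - t) - 1) == h M) (iota 0 256).
Proof. rewrite /h unlock; vm_compute; reflexivity. Qed.

Lemma h_super a b : a <= 128 -> b <= 128 -> h a + h b <= h (a + b).
Proof.
move=> ha hb; have H := allP chk_super a; rewrite mem_iota in H.
have H2 := allP (H ltac:(lia)) b; rewrite mem_iota in H2; exact: H2 ltac:(lia).
Qed.

Lemma h_link C : C < 2048 -> \sum_(3 <= u < 11) bit C u * (2 ^ (u - 2) - 1) = h (C %/ 8).
Proof. move=> hC; have H := allP chk_link C; rewrite mem_iota in H; exact/eqP/H. Qed.

Lemma h_mono m n : m <= n -> n <= 256 -> h m <= h n.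
Proof.
move=> mn; elim: n mn => [|n IH]; first by rewrite leqn0 => /eqP->.
rewrite leq_eqVlt => /orP[/eqP-> //|]; rewrite ltnS => mn hn.
apply: leq_trans (IH mn (ltnW hn)) _.
have H := allP chk_mono n; rewrite mem_iota in H; exact: H.
Qed.

Lemma h_pow d : d <= 8 -> h (2 ^ d) = 2 ^ d.+1 - 1.
Proof. move=> hd; have H := allP chk_pow d; rewrite mem_iota in H; apply/eqP/H; lia. Qed.

Lemma bits_sum M : M < 256 -> \sum_(s < 8) bit M (7 - s) * 2 ^ (10 - s) = 8 * M.
Proof.
rewrite -(big_mkord xpredT (fun s => bit M (7 - s) * 2 ^ (10 - s))).
move=> hM; have H := allP chk_bits M; rewrite mem_iota in H; exact/eqP/H.
Qed.

Lemma spine_h M : M < 256 -> \sum_(0 <= t < 8) bit M (7 - t) * (2 ^ (8 - t) - 1) = h M.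
Proof. move=> hM; have H := allP chk_spine M; rewrite mem_iota in H; exact/eqP/H. Qed.

Section Comb.
Variable solv : nat -> bool.
Definition tcnt := @tsum nat 0%N addn (fun i => nat_of_bool (solv i)).
Fixpoint cM k d := if d is d'.+1 then (if solv k then 2 ^ d' else cM (2*k).+1 d' + cM (2*k).+2 d') else 0.

Lemma tcntS k d : tcnt k d.+1 = solv k + tcnt (2*k).+1 d + tcnt (2*k).+2 d.
Proof. by []. Qed.

Lemma tcnt_le d k : tcnt k d <= 2 ^ d - 1.
Proof.
elim: d k => [|d IH] k; first by [].
rewrite tcntS; have := IH (2*k).+1; have := IH (2*k).+2; have := expn_gt0 2 d.
rewrite expnS; case: (solv k) => /=; lia.
Qed.

Lemma cM_le d k : cM k d.+1 <= 2 ^ d.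
Proof.
elim: d k => [|d IH] k /=; first by case: (solv k).
case: (solv k) => //; have := IH (2*k).+1; have := IH (2*k).+2.
rewrite /= expnS; lia.
Qed.

Lemma cM_le128 d k : d <= 8 -> cM k d <= 128.
Proof.
case: d => [//|d] hd; apply: leq_trans (cM_le d k) _.
have -> : 128 = 2 ^ 7 by []. by rewrite leq_exp2l //; lia.
Qed.

Lemma cnt_h d k : d <= 9 -> tcnt k d <= h (cM k d).
Proof.
elim: d k => [|d IH] k hd; first by [].
rewrite tcntS /=; case hs: (solv k).
  rewrite h_pow; last by lia.
  by have := tcnt_le d.+1 k; rewrite tcntS hs.
have h1 := IH (2*k).+1 (ltnW hd); have h2 := IH (2*k).+2 (ltnW hd).
apply: leq_trans (h_super (cM_le128 _ _) (cM_le128 _ _)); try lia.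
Qed.
End Comb.


Lemma tlevel0 : tlevel 0 = 0%N. Proof. by []. Qed.
Lemma tlevel_c1 k : tlevel (2*k).+1 = (tlevel k).+1.
Proof. rewrite /tlevel -trunc_log2_double //; congr trunc_log; rewrite -mul2n; lia. Qed.
Lemma tlevel_c2 k : tlevel (2*k).+2 = (tlevel k).+1.
Proof.
rewrite /tlevel trunc_log2S; last by lia.
have -> : (2*k).+3 = true + (k.+1).*2 by rewrite -mul2n; lia.
by rewrite half_bit_double.
Qed.
Lemma tlevel_lt k : (tlevel k <= 8)%N -> (k < 511)%N.
Proof. move=> h; have := trunc_log_ltn k.+1 (isT : 1 < 2)%N; rewrite -/(tlevel k).
have : (2 ^ (tlevel k).+1 <= 2 ^ 9)%N by rewrite leq_exp2l.
rewrite (_ : 2 ^ 9 = 512)%N //; lia.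
Qed.
Lemma tlevel_ub k n : (k < 2 ^ n - 1)%N -> (tlevel k < n)%N.
Proof.
move=> hk; rewrite ltnNge; apply/negP => hn.
have := trunc_logP (isT : 1 < 2)%N (ltn0Sn k); rewrite -/(tlevel k).
have : (2 ^ n <= 2 ^ tlevel k)%N by rewrite leq_exp2l.
lia.
Qed.
Lemma tlevel_pow s : (0 < s)%N -> tlevel (2 ^ s) = s.
Proof.
move=> hs; rewrite /tlevel; apply: trunc_log_eq => //.
have := ltn_exp2l s s.+1 (isT : 1 < 2)%N; rewrite ltnSn => h2.
have e : (2 ^ s.+1 = 2 * 2 ^ s)%N by rewrite expnS.
have := expn_gt0 2 s; have : (2 <= 2 ^ s)%N.
  by rewrite -{1}(expn1 2) leq_exp2l.
lia.
Qed.
Lemma tlevel_spine s : tlevel (2 ^ s).-1 = s.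
Proof. by rewrite /tlevel prednK ?expn_gt0 // trunc_expnK. Qed.

Lemma parent_cases k : (0 < k)%N ->
  k = (2 * (k.-1 %/ 2)).+1 \/ k = (2 * (k.-1 %/ 2)).+2.
Proof. lia. Qed.

Section Real.
Variable R : realFieldType.
Local Open Scope ring_scope.

Definition ext (f : 'I_1023 -> R) (k : nat) : R := if (k < 1023)%N then f (inord k) else 0.
Definition pbarn (k : nat) : R := if (k < 511)%N then (2 ^ (11 - tlevel k))%N%:R else 0.
Definition infl (q : nat -> R) (k : nat) : R := if k is 0 then 0 else q (k.-1 %/ 2)%N / 2.

Lemma ext_ord f (i : 'I_1023) : ext f i = f i.
Proof. by rewrite /ext ltn_ord inord_val. Qed.

Lemma sum_ind n (G : nat -> R) x : (x < n)%N ->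
  \sum_(j < n) (if (j : nat) == x then G j else 0) = G x.
Proof.
move=> hx; rewrite (bigD1 (Ordinal hx)) //= eqxx big1 ?addr0 // => j hj.
have : (j : nat) != x by apply: contraNneq hj => e; apply/eqP/val_inj.
by move/negbTE->.
Qed.

Lemma pbarn_ge0 k : 0 <= pbarn k.
Proof. by rewrite /pbarn; case: ifP. Qed.

Lemma pbarE (i : 'I_1023) : pbar (@treeL R) i = pbarn i.
Proof.
rewrite /pbar /treeL /pbarn; case: ifP => hi /=; last by rewrite big1.
have hs := tlevel_ub (n := 9) hi.
set a : R := (2 ^ (10 - tlevel i))%N%:R.
rewrite (eq_bigr (fun j : 'I_1023 => (if (j:nat) == (2 * i).+1 then a else 0) +
   (if (j:nat) == (2 * i).+2 then a else 0))); last first.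
  move=> j _; case: eqP => [->|_]; case: eqP => //=; rewrite ?addr0 ?add0r //; lia.
rewrite big_split /= !(sum_ind (fun _ => a)); try lia.
rewrite /a.
rewrite -natrD; congr (_%:R).
have -> : (11 - tlevel i = (10 - tlevel i).+1)%N by lia.
by rewrite expnS mul2n addnn.
Qed.


Lemma pbarn_pos k : (k < 511)%N -> pbarn k != 0.
Proof. by move=> hk; rewrite /pbarn hk pnatr_eq0 expn_eq0. Qed.

Lemma pbarn_half q k : (k < 511)%N -> (k = (2 * q).+1 \/ k = (2 * q).+2) ->
  pbarn q / 2 = pbarn k.
Proof.
move=> hk hkq; have hq : (q < 511)%N by lia.
have hl : tlevel k = (tlevel q).+1 by case: hkq => ->; rewrite ?tlevel_c1 ?tlevel_c2.
have hs := tlevel_ub (n := 9) hk.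
rewrite /pbarn hk hq hl.
have -> : (11 - tlevel q = (11 - (tlevel q).+1).+1)%N by lia.
by rewrite expnS natrM; field.
Qed.

Lemma inflE (p : 'I_1023 -> R) (i : 'I_1023) :
  \sum_(j < 1023) relLiab (@treeL R) j i * p j = infl (ext p) i.
Proof.
rewrite (eq_bigr (fun j : 'I_1023 => if (0 < i)%N && ((j : nat) == (i.-1 %/ 2)%N)
   then ext p j / 2 else 0)); last first.
  move=> j _; rewrite /relLiab pbarE ext_ord.
  have hi := ltn_ord i.
  case hj: (j < 511)%N.
    rewrite pbarn_pos // /treeL hj /=.
    case: ifP => hc.
      have e : (i : nat) = (2 * j).+1 \/ (i : nat) = (2 * j).+2 by move: hc => /orP[] /eqP; tauto.
      have e2 : (i.-1 %/ 2)%N = j by lia.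
      have hcond : ((0 < i)%N && ((j : nat) == (i.-1 %/ 2)%N)) = true by rewrite e2 eqxx andbT; lia.
      rewrite hcond.
      rewrite /pbarn hj.
      have hs := tlevel_ub (n := 9) hj.
      have -> : (11 - tlevel j = (10 - tlevel j).+1)%N by lia.
      rewrite expnS natrM; field; rewrite pnatr_eq0 expn_eq0 //.
    rewrite !mul0r; case: ifP => // /andP[h1 /eqP h2]; exfalso.
    move/negbT: hc; rewrite negb_or => /andP[/eqP n1 /eqP n2]; lia.
  rewrite /pbarn hj eqxx /= mul0r; case: ifP => // /andP[h1 /eqP h2]; lia.
case: i => [[|k] hk] /=; first by rewrite big1.
by rewrite (sum_ind (fun j => ext p j / 2)) //; lia.
Qed.

Definition clnat (c p : 'I_1023 -> R) := forall k, (k < 1023)%N ->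
  ext p k = Num.min (pbarn k) (infl (ext p) k + ext c k).

Lemma clearing_nat c p : clearing (@treeL R) (fun _ => 0) c p <-> clnat c p.
Proof.
split=> H.
  move=> k hk; have := H (Ordinal hk); rewrite pbarE inflE addr0 /=.
  have e : forall f, ext f k = f (Ordinal hk).
    by move=> f; rewrite /ext hk; congr f; apply/val_inj; rewrite /= inordK.
  by rewrite !e.
move=> i; have := H i (ltn_ord i); rewrite !ext_ord => ->.
by rewrite pbarE inflE addr0.
Qed.

Lemma ext_ge0 (c : 'I_1023 -> R) : (forall i, 0 <= c i) -> forall k, 0 <= ext c k.
Proof. by move=> hc k; rewrite /ext; case: ifP. Qed.

Lemma pn_ge0 c p : (forall i, 0 <= c i) -> clnat c p -> forall k, 0 <= ext p k.
Proof.
move=> hc hp k; elim/ltn_ind: k => k IH.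
case hk: (k < 1023)%N; last by rewrite /ext hk.
rewrite hp // le_min pbarn_ge0 /=; apply: addr_ge0; last exact: ext_ge0.
case: k IH hk => [|k] IH hk //=; apply: divr_ge0 => //; apply: IH; lia.
Qed.

Lemma infl_ge0 (q : nat -> R) : (forall k, 0 <= q k) -> forall k, 0 <= infl q k.
Proof. by move=> hq [|k] //=; apply: divr_ge0. Qed.

Fixpoint pf (cn : nat -> R) (f k : nat) : R :=
  if f is f'.+1 then Num.min (pbarn k) (infl (pf cn f') k + cn k) else 0.

Arguments pf : simpl never.

Lemma pf_fuel cn f1 f2 k : (k < f1)%N -> (k < f2)%N -> pf cn f1 k = pf cn f2 k.
Proof.
elim: f1 f2 k => [|f1 IH] [|f2] k //= h1 h2; congr (Num.min _ (_ + _)).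
case: k h1 h2 => [|k] h1 h2 //=; congr (_ / _); apply: IH; lia.
Qed.

Lemma pfS cn f k : pf cn f.+1 k = Num.min (pbarn k) (infl (pf cn f) k + cn k).
Proof. by []. Qed.

Lemma exists_clearing (c : 'I_1023 -> R) : exists p, clnat c p.
Proof.
pose p := fun i : 'I_1023 => pf (ext c) 1024 i.
have ep : forall k, (k < 1023)%N -> ext p k = pf (ext c) 1024 k.
  by move=> k hk; rewrite /ext hk /p inordK.
exists p => k hk.
have hi : infl (ext p) k = infl (pf (ext c) 1023) k.
  case: k hk {ep} (ep) => [|k] hk ep; first by [].
  rewrite /infl ep; last by lia.
  rewrite (@pf_fuel _ 1024 1023) //; lia.
by rewrite hi ep // pfS.
Qed.

End Real.


Definition solv_of (R : realFieldType) (p : 'I_1023 -> R) k :=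
  (k < 511)%N && ~~ (ext p k < pbarn R k)%R.

Lemma tsumS V (idx : V) (op : Monoid.com_law idx) F k d :
  tsum op F k d.+1 = op (op (F k) (tsum op F (2*k).+1 d)) (tsum op F (2*k).+2 d).
Proof. by []. Qed.

Section Low.
Variable R : realFieldType.
Local Open Scope ring_scope.
Variables (c p : 'I_1023 -> R).
Hypothesis hc : forall i, 0 <= c i.
Hypothesis hp : clnat c p.

Lemma tsum_ge0 (F : nat -> R) : (forall k, 0 <= F k) -> forall d k, 0 <= tsum +%R F k d.
Proof.
move=> hF; elim=> [|d IH] k; first by [].
by rewrite tsumS !addr_ge0.
Qed.

Lemma Ndef_tcnt : Ndef (@treeL R) p = (511 - tcnt (solv_of p) 0 9)%N.
Proof.
rewrite /Ndef -sum1_card big_mkcond /=.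
under eq_bigr => i _ do rewrite inE pbarE -(ext_ord p i).
rewrite -(big_mkord xpredT (fun k => if ext p k < pbarn R k then 1%N else 0%N)).
rewrite (@big_cat_nat _ _ _ 511) //=.
rewrite [X in (_ + X)%N]big_nat_cond [X in (_ + X)%N]big1 ?addn0; last first.
  move=> k /andP[/andP[h1 h2] _]; rewrite /pbarn ltnNge h1 /=.
  by rewrite ltNge (pn_ge0 hc hp).
rewrite big_mkord /tcnt tsum_root.
have : (\sum_(i < 511) (if (ext p i < pbarn R i)%R then 1 else 0) +
   \sum_(i < 511) solv_of p i)%N = 511%N.
  rewrite -big_split /= (eq_bigr (fun _ => 1%N)) ?sum_nat_const ?card_ord ?muln1 //.
  by move=> i _; rewrite /solv_of ltn_ord /=; case: (_ < _).
move=> e; by rewrite -[X in (X - _)%N]e addnK.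
Qed.

Lemma cMS (solv : nat -> bool) k d :
  cM solv k d.+1 = (if solv k then 2 ^ d else cM solv (2*k).+1 d + cM solv (2*k).+2 d)%N.
Proof. by []. Qed.

Lemma money d k : (tlevel k + d = 9)%N -> (k < 1023)%N ->
  (8 * cM (solv_of p) k d)%N%:R <= infl (ext p) k + tsum +%R (ext c) k d.
Proof.
have pge := pn_ge0 hc hp; have cge := ext_ge0 hc.
elim: d k => [|d IH] k hl hk.
  by rewrite muln0 /= addr0; apply: infl_ge0.
have hk5 : (k < 511)%N by apply: tlevel_lt; lia.
have hpk := hp hk.
have hs9 := tlevel_ub (n := 9) hk5.
rewrite cMS tsumS /solv_of hk5 /=.
have t1 := tsum_ge0 cge d (2*k).+1; have t2 := tsum_ge0 cge d (2*k).+2.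
case hs: (ext p k < pbarn R k) => /=.
  have e : ext p k = infl (ext p) k + ext c k.
    move: hs; rewrite hpk; case: (leP (pbarn R k) (infl (ext p) k + ext c k)) => h1.
      by rewrite ltxx.
    by [].
  have i1 : infl (ext p) (2*k).+1 = ext p k / 2.
    by rewrite /infl (_ : ((2*k).+1.-1 %/ 2 = k)%N) //; lia.
  have i2 : infl (ext p) (2*k).+2 = ext p k / 2.
    by rewrite /infl (_ : ((2*k).+2.-1 %/ 2 = k)%N) //; lia.
  have h1 := IH (2*k).+1 ltac:(rewrite tlevel_c1; lia) ltac:(lia).
  have h2 := IH (2*k).+2 ltac:(rewrite tlevel_c2; lia) ltac:(lia).
  rewrite i1 in h1; rewrite i2 in h2.
  rewrite mulnDr natrD; lra.
have h1 : pbarn R k <= ext p k by rewrite leNgt hs.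
have h2 : ext p k <= infl (ext p) k + ext c k by rewrite hpk ge_min lexx orbT.
have h3 : pbarn R k = (8 * 2 ^ d)%N%:R.
  rewrite /pbarn hk5; congr (_%:R).
  have -> : (11 - tlevel k = d.+3)%N by lia.
  by rewrite !expnS; lia.
rewrite -h3; lra.
Qed.

Lemma lower (C : nat) : (C < 2048)%N -> feasible C%:R c ->
  (511 - h (C %/ 8) <= Ndef (@treeL R) p)%N.
Proof.
move=> hC [_ hsum]; rewrite Ndef_tcnt.
have m := money (d := 9) (k := 0) erefl isT.
rewrite (_ : infl (ext p) 0 = 0) // add0r tsum_root in m.
have hle : \sum_(i < 511) ext c i <= C%:R.
  rewrite -hsum (big_ord_widen 1023 (ext c)) // big_mkcond /=.
  apply: ler_sum => i _; rewrite ext_ord; case: ifP => _ //.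
have : (8 * cM (solv_of p) 0 9 <= C)%N by rewrite -(ler_nat R); apply: le_trans m hle.
move=> h8.
have h1 := cnt_h (solv_of p) 0 (leqnn 9).
have h2 := h_mono (m := cM (solv_of p) 0 9) (n := C %/ 8) ltac:(lia) ltac:(lia).
lia.
Qed.

End Low.


Lemma pow_lt s : (s < 8)%N -> (2 ^ s.+1 < 511)%N.
Proof.
move=> hs; have : (2 ^ s.+1 <= 2 ^ 8)%N by rewrite leq_exp2l.
rewrite (_ : 2 ^ 8 = 256)%N //; lia.
Qed.

Section Up.
Variable R : realFieldType.
Local Open Scope ring_scope.
Variables (C : nat).
Hypothesis hC : (C < 2048)%N.

Definition cvec (i : 'I_1023) : R :=
  (if (i : nat) == 0%N then (C %% 8)%N%:R else 0) +
  \sum_(s < 8) (if (i : nat) == (2 ^ s.+1)%N then (bit (C %/ 8) (7 - s) * 2 ^ (10 - s))%N%:R else 0).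

Lemma cvec_ge0 i : 0 <= cvec i.
Proof.
rewrite /cvec; apply: addr_ge0; first by case: ifP.
by apply: sumr_ge0 => s _; case: ifP.
Qed.

Lemma cvec_sum : \sum_i cvec i = C%:R.
Proof.
rewrite big_split /= (sum_ind (fun _ => (C %% 8)%N%:R)) // exchange_big /=.
rewrite (eq_bigr (fun s : 'I_8 => (bit (C %/ 8) (7 - s) * 2 ^ (10 - s))%N%:R)); last first.
  move=> s _; rewrite (sum_ind (fun _ => (bit (C %/ 8) (7 - s) * 2 ^ (10 - s))%N%:R)) //.
  have := pow_lt (ltn_ord s); lia.
rewrite -natr_sum bits_sum; last by lia.
rewrite -natrD; congr (_%:R); have := divn_eq C 8; lia.
Qed.

Variable p : 'I_1023 -> R.
Hypothesis hp : clnat cvec p.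

Lemma full_subtree d k : (tlevel k + d.+1 = 9)%N -> ext p k = pbarn R k ->
  tcnt (solv_of p) k d.+1 = (2 ^ d.+1 - 1)%N.
Proof.
have pge := pn_ge0 cvec_ge0 hp; have cge := ext_ge0 cvec_ge0.
elim: d k => [|d IH] k hl e.
  have hk5 : (k < 511)%N by apply: tlevel_lt; lia.
  by rewrite tcntS /= /solv_of hk5 e ltxx.
have hk5 : (k < 511)%N by apply: tlevel_lt; lia.
rewrite tcntS.
have s1 : solv_of p k = true by rewrite /solv_of hk5 e ltxx.
have ch : forall c, (c = (2*k).+1 \/ c = (2*k).+2) -> (tlevel c = (tlevel k).+1) ->
    tcnt (solv_of p) c d.+1 = (2 ^ d.+1 - 1)%N.
  move=> c hc hlc; have hc5 : (c < 511)%N by apply: tlevel_lt; lia.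
  apply: IH; first by lia.
  rewrite hp; last by lia.
  have -> : infl (ext p) c = pbarn R c.
    rewrite -(@pbarn_half R _ _ hc5 hc) -e; case: hc => -> /=; congr (ext p _ / 2); lia.
  by rewrite min_l // lerDl.
rewrite s1 (ch (2*k).+1) ?tlevel_c1 ?(ch (2*k).+2) ?tlevel_c2; try tauto.
rewrite !expnS; have := expn_gt0 2 d; lia.
Qed.

Lemma chosen s : (s < 8)%N -> bit (C %/ 8) (7 - s) = 1%N -> ext p (2 ^ s.+1) = pbarn R (2 ^ s.+1).
Proof.
move=> hs hb; have h5 := pow_lt hs.
rewrite hp; last by lia.
apply: min_l; rewrite -[X in X <= _]add0r; apply: lerD.
  by apply: infl_ge0; exact: pn_ge0 cvec_ge0 hp.
rewrite /ext (_ : (2 ^ s.+1 < 1023)%N); last by lia.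
rewrite /cvec inordK; last by lia.
rewrite (_ : (2 ^ s.+1 == 0)%N = false) ?add0r; last by rewrite expn_eq0.
rewrite (bigD1 (Ordinal hs)) //= eqxx hb mul1n.
rewrite -[X in X <= _]addr0; apply: lerD; last first.
  by apply: sumr_ge0 => i _; case: ifP.
rewrite /pbarn h5 tlevel_pow //.
Qed.

Lemma spine j : (j <= 8)%N ->
  (\sum_(8 - j <= t < 8) bit (C %/ 8) (7 - t) * (2 ^ (8 - t) - 1) <=
   tcnt (solv_of p) (2 ^ (8 - j)).-1 j.+1)%N.
Proof.
elim: j => [|j IH] hj; first by rewrite big_geq.
set s := (8 - j.+1)%N.
have e1 : (8 - j = s.+1)%N by rewrite /s; lia.
rewrite e1 in IH.
rewrite big_ltn; last by rewrite /s; lia.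
rewrite tcntS.
have g := expn_gt0 2 s.
have c1 : ((2 * (2 ^ s).-1).+1 = (2 ^ s.+1).-1)%N by rewrite expnS; lia.
have c2 : ((2 * (2 ^ s).-1).+2 = 2 ^ s.+1)%N by rewrite expnS; lia.
rewrite c2 c1.
have hI := IH (ltnW hj).
have hb : (bit (C %/ 8) (7 - s) * (2 ^ (8 - s) - 1) <= tcnt (solv_of p) (2 ^ s.+1) j.+1)%N.
  have : (bit (C %/ 8) (7 - s) < 2)%N by rewrite /bit ltn_mod.
  case hbit: (bit _ _) => [|[|//]] _; first by [].
  rewrite full_subtree.
  - rewrite mul1n (_ : 8 - s = j.+1)%N //; rewrite /s; lia.
  - rewrite tlevel_pow //; rewrite /s; lia.
  - apply: chosen => //; rewrite /s; lia.
lia.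
Qed.

End Up.

End Helpers.
Import Helpers.

Local Open Scope ring_scope.

Theorem mainTheorem3 (R : realFieldType) :
  (forall C : R, 2048 <= C ->
     min_defaults (@treeL R) (fun _ => 0) C 0%N) /\
  (forall C : nat, (C < 2048)%N ->
     min_defaults (@treeL R) (fun _ => 0) C%:R
       (511 - \sum_(3 <= u < 11) bit C u * (2 ^ (u - 2) - 1))%N).
Proof.
split.
- move=> C hC; split; last by [].
  pose c := fun i : 'I_1023 => if i == ord0 then C else 0.
  have cge : forall i, 0 <= c i by move=> i; rewrite /c; case: ifP => _ //; lra.
  pose P := fun i : 'I_1023 => pbar (@treeL R) i.
  have eP : forall k, (k < 1023)%N -> ext P k = pbarn R k.
    by move=> k hk; rewrite /ext hk /P pbarE inordK.
  exists c, P; split; [|split].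
  + split => //; rewrite /c (bigD1 ord0) //= big1 ?addr0 // => i /negbTE -> //.
  + apply/clearing_nat => k hk; rewrite eP //; symmetry; apply: min_l.
    case: k hk => [|k] hk.
      have -> : pbarn R 0 = 2048 by [].
      have -> : ext c 0 = C by rewrite /ext /= /c (_ : inord 0 == ord0) //; apply/eqP/val_inj; rewrite /= inordK.
      by rewrite add0r.
    rewrite -[X in X <= _]addr0; apply: lerD; last exact: ext_ge0.
    rewrite /infl /= eP; last by lia.
    case h5: (k.+1 < 511)%N; last by rewrite {1}/pbarn h5 divr_ge0 ?pbarn_ge0.
    by rewrite (@pbarn_half R _ _ h5) //; lia.
  + rewrite /Ndef; apply/eqP; rewrite cards_eq0; apply/eqP/setP => i.
    by rewrite !inE ltxx.
- move=> C hC; rewrite h_link //; split.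
  + have [p hp] := exists_clearing (cvec R C).
    exists (cvec R C), p; split; [split|split].
    * exact: cvec_ge0.
    * exact: cvec_sum.
    * exact/clearing_nat.
    * apply/anti_leq/andP; split; last exact: (lower (@cvec_ge0 R C) hp hC (conj (@cvec_ge0 R C) (@cvec_sum R C hC))).
      rewrite (Ndef_tcnt (@cvec_ge0 R C) hp).
      have := spine hC hp (isT : (8 <= 8)%N).
      rewrite subnn expn0 /= -/(index_iota 0 8) spine_h //; last by lia.
      lia.
  + move=> c p [hc hs] hcl; apply: lower => //; exact/clearing_nat.
Qed.
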